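(* For a liner $X$ with $|X|>2$ the following are equivalent: (1) $X$ is Playfair; (2) $X$ is affine, $3$-regular and $3$-long; (3) for every line $L\subseteq X$ and point $x\in X\setminus L$ there exists a unique line $\Lambda$ such that $x\in\Lambda\subseteq\overline{L\cup\{x\}}\setminus L$.
   Context: A liner is a set $X$ of points with a family of subsets called lines such that any two distinct points lie in a unique line and every line contains at least two points. For distinct $x,y$, $\overline{xy}$ is the line through them and $\overline{xx}:=\{x\}$. A set is flat if it contains $\overline{xy}$ for all its distinct points; $\overline A$ is the smallest flat containing $A$; the rank $\|A\|$ is the smallest cardinality of $B\subseteq X$ with $A\subseteq\overline B$; a plane is a flat of rank 3. $X$ is Playfair if for every plane $P$, line $L\subseteq P$ and point $x\in P\setminus L$ there exists a unique line $\Lambda$ with $x\in\Lambda\subseteq P\setminus L$. $X$ is affine if for all $o,x,y\in X$ and $p\in\overline{xy}\setminus\overline{ox}$ there exists $u\in\overline{oy}$ such that for every $v\in\overline{oy}$: $u=v$ iff $\overline{vp}\cap\overline{ox}=\varnothing$. $X$ is $3$-regular if for every set $A\subseteq X$ with $|A|<3$ and points $o\in\overline A$, $p\in X\setminus\overline A$, we have $\overline{\{p\}\cup A}=\bigcup_{u\in\overline{op}}\bigcup_{a\in\overline A}\overline{ua}$. $X$ is $3$-long if every line has at least $3$ points. *)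

(* Defs.v *)
From Stdlib Require Import List.
Import ListNotations.

Set Implicit Arguments.

Section Liners.
Variable X : Type.
Variable IsLine : (X -> Prop) -> Prop.

Definition subset (A B : X -> Prop) : Prop := forall z, A z -> B z.
Definition seteq (A B : X -> Prop) : Prop := forall z, A z <-> B z.

Definition is_liner : Prop :=
  (forall x y, x <> y ->
     (exists L, IsLine L /\ L x /\ L y) /\
     (forall L L', IsLine L -> IsLine L' -> L x -> L y -> L' x -> L' y -> seteq L L'))
  /\ (forall L, IsLine L -> exists x y, x <> y /\ L x /\ L y).

(* the line through x and y (for x <> y), and {x} when x = y *)
Definition lineThrough (x y : X) : X -> Prop :=
  fun z => (x = y /\ z = x) \/ (x <> y /\ exists L, IsLine L /\ L x /\ L y /\ L z).

Definition flat (A : X -> Prop) : Prop :=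
  forall x y, A x -> A y -> x <> y -> subset (lineThrough x y) A.

Definition closure (A : X -> Prop) : X -> Prop :=
  fun z => forall F, flat F -> subset A F -> F z.

Definition of_list (l : list X) : X -> Prop := fun z => In z l.

Definition rank_le (A : X -> Prop) (n : nat) : Prop :=
  exists B : list X, length B <= n /\ subset A (closure (of_list B)).

Definition plane (P : X -> Prop) : Prop :=
  flat P /\ rank_le P 3 /\ ~ rank_le P 2.

Definition playfair : Prop :=
  forall P L x, plane P -> IsLine L -> subset L P -> P x -> ~ L x ->
    (exists Lam, IsLine Lam /\ Lam x /\ subset Lam (fun z => P z /\ ~ L z)) /\
    (forall Lam Lam', IsLine Lam -> Lam x -> subset Lam (fun z => P z /\ ~ L z) ->
                      IsLine Lam' -> Lam' x -> subset Lam' (fun z => P z /\ ~ L z) ->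
                      seteq Lam Lam').

Definition affine : Prop :=
  forall o x y p, lineThrough x y p -> ~ lineThrough o x p ->
    exists u, lineThrough o y u /\
      forall v, lineThrough o y v ->
        (u = v <-> ~ exists w, lineThrough v p w /\ lineThrough o x w).

Definition card_lt3 (A : X -> Prop) : Prop :=
  exists l : list X, length l <= 2 /\ seteq A (of_list l).

Definition regular3 : Prop :=
  forall (A : X -> Prop) o p, card_lt3 A -> closure A o -> ~ closure A p ->
    seteq (closure (fun z => z = p \/ A z))
          (fun z => exists u a, lineThrough o p u /\ closure A a /\ lineThrough u a z).

Definition long3 : Prop :=
  forall L, IsLine L -> exists a b c, a <> b /\ a <> c /\ b <> c /\ L a /\ L b /\ L c.

Definition parallel_property : Prop :=
  forall L x, IsLine L -> ~ L x ->
    let S := fun z => closure (fun w => L w \/ w = x) z /\ ~ L z in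
    (exists Lam, IsLine Lam /\ Lam x /\ subset Lam S) /\
    (forall Lam Lam', IsLine Lam -> Lam x -> subset Lam S ->
                      IsLine Lam' -> Lam' x -> subset Lam' S -> seteq Lam Lam').

End Liners.

Definition more_than_two (X : Type) : Prop :=
  exists a b c : X, a <> b /\ a <> c /\ b <> c.

(* Main.v *)
Require Import Defs.
From Stdlib Require Import List Classical FunctionalExtensionality PropExtensionality Lia.
Import ListNotations.

Section Liner.
Variable X : Type.
Variable IsLine : (X -> Prop) -> Prop.
Hypothesis HL : is_liner IsLine.

Local Notation LT := (lineThrough IsLine).
Local Notation cl := (closure IsLine).
Local Notation fl := (flat IsLine).

Lemma ext (A B : X -> Prop) : (forall z, A z <-> B z) -> A = B.
Proof. intro H; apply functional_extensionality; intro z; apply propositional_extensionality; apply H. Qed.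

Lemma ex_line {x y} : x <> y -> exists L, IsLine L /\ L x /\ L y.
Proof. intro H; apply (proj1 (proj1 HL x y H)). Qed.

Lemma line_uniq {L L' x y} : IsLine L -> IsLine L' -> L x -> L y -> L' x -> L' y -> x <> y -> L = L'.
Proof. intros. apply ext. apply (proj2 (proj1 HL x y H5)); auto. Qed.

Lemma line_two {L} : IsLine L -> exists x y, x <> y /\ L x /\ L y.
Proof. apply (proj2 HL). Qed.

Lemma line_other {L} y : IsLine L -> exists t, L t /\ t <> y.
Proof. intro H. destruct (line_two H) as [a [b [Hab [Ha Hb]]]].
  destruct (classic (a = y)). exists b; split; auto; congruence. exists a; auto. Qed.

Lemma line_eq {L a b} : IsLine L -> L a -> L b -> a <> b -> LT a b = L.
Proof. intros HLl Ha Hb Hab. apply ext; intro z; unfold lineThrough; split.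
- intros [[E _]|[_ [K [HK [Ka [Kb Kz]]]]]]. contradiction.
  rewrite (line_uniq HK HLl Ka Kb Ha Hb Hab) in Kz. exact Kz.
- intro Hz. right. split; auto. exists L; auto.
Qed.

Lemma LT_isline {a b} : a <> b -> IsLine (LT a b).
Proof. intro H. destruct (ex_line H) as [L [HLl [Ha Hb]]]. rewrite (line_eq HLl Ha Hb H). exact HLl. Qed.

Lemma LT_a a b : LT a b a.
Proof. unfold lineThrough. destruct (classic (a = b)). left; auto.
  right. split; auto. destruct (ex_line H) as [L [? [? ?]]]. exists L; auto. Qed.

Lemma LT_b a b : LT a b b.
Proof. unfold lineThrough. destruct (classic (a = b)). left; auto.
  right. split; auto. destruct (ex_line H) as [L [? [? ?]]]. exists L; auto. Qed.

Lemma LT_aa {a z} : LT a a z -> z = a.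
Proof. unfold lineThrough. intros [[_ E]|[E _]]. auto. congruence. Qed.

Lemma LT_two {a b c d} : a <> b -> LT a b c -> LT a b d -> c <> d -> LT c d = LT a b.
Proof. intros. apply line_eq; auto. apply LT_isline; auto. Qed.

Lemma LT_sym a b : LT a b = LT b a.
Proof. destruct (classic (a = b)). subst; auto.
  symmetry. apply LT_two; auto. apply LT_b. apply LT_a. Qed.

Lemma LT_exch {a b c} : a <> c -> LT a b c -> LT a c b.
Proof. intros Hac H. destruct (classic (a = b)). subst. apply LT_aa in H. congruence.
  rewrite (LT_two H0 (LT_a a b) H Hac). apply LT_b. Qed.

Lemma LT_line {L a b z} : IsLine L -> L a -> L b -> a <> b -> L z -> LT a b z.
Proof. intros. rewrite (line_eq H H0 H1 H2). auto. Qed.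

Lemma LT_flat a b : fl (LT a b).
Proof. intros x y Hx Hy Hxy z Hz. destruct (classic (a = b)).
  subst. apply LT_aa in Hx; apply LT_aa in Hy. congruence.
  rewrite (LT_two H Hx Hy Hxy) in Hz. exact Hz. Qed.

Lemma flat_LT {F a b z} : fl F -> F a -> F b -> LT a b z -> F z.
Proof. intros HF Ha Hb Hz. destruct (classic (a = b)). subst. apply LT_aa in Hz. subst; auto.
  exact (HF a b Ha Hb H z Hz). Qed.

Lemma line_flat {L} : IsLine L -> fl L.
Proof. intros H. destruct (line_two H) as [a [b [Hab [Ha Hb]]]]. rewrite <- (line_eq H Ha Hb Hab). apply LT_flat. Qed.

Lemma cl_flat {A} : fl (cl A).
Proof. intros x y Hx Hy Hxy z Hz F HF HA. exact (HF x y (Hx F HF HA) (Hy F HF HA) Hxy z Hz). Qed.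

Lemma cl_incl {A : X -> Prop} {z} : A z -> cl A z.
Proof. intros H F HF HA. auto. Qed.

Lemma cl_min {A F : X -> Prop} : fl F -> subset A F -> subset (cl A) F.
Proof. intros HF HA z Hz. apply Hz; auto. Qed.

Lemma cl_sub {A B : X -> Prop} {z} : (forall w, A w -> cl B w) -> cl A z -> cl B z.
Proof. intros H Hz. exact (cl_min (cl_flat (A:=B)) H z Hz). Qed.

Lemma cl_LT {A a b z} : cl A a -> cl A b -> LT a b z -> cl A z.
Proof. intros. exact (flat_LT (cl_flat (A:=A)) H H0 H1). Qed.

Lemma lines_meet1 {K M p q} : IsLine K -> IsLine M -> K p -> K q -> M p -> M q -> K <> M -> p = q.
Proof. intros. destruct (classic (p = q)); auto. exfalso. apply H5. apply (line_uniq H H0 H1 H2 H3 H4 H6). Qed.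


Definition pl (L : X -> Prop) x := cl (fun w => L w \/ w = x).

Lemma pl_L {L} x z : L z -> pl L x z.
Proof. intro; apply cl_incl; auto. Qed.
Lemma pl_x L x : pl L x x.
Proof. apply cl_incl; auto. Qed.
Lemma pl_flat L x : fl (pl L x).
Proof. apply cl_flat. Qed.

Lemma pl_min {L x F z} : fl F -> (forall w, L w -> F w) -> F x -> pl L x z -> F z.
Proof. intros HF H1 H2 Hz. apply (cl_min HF (A:= fun w => L w \/ w = x)); auto.
  intros w [Hw|Hw]; subst; auto. Qed.

Section Par.
Hypothesis HP : parallel_property IsLine.

Definition ispar L x (Lam : X -> Prop) := IsLine Lam /\ Lam x /\ forall z, Lam z -> pl L x z /\ ~ L z.

Lemma par_ex {L x} : IsLine L -> ~ L x -> exists Lam, ispar L x Lam.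
Proof. intros H1 H2. destruct (HP L x H1 H2) as [[Lam [A [B C]]] _]. exists Lam. split; auto. Qed.

Lemma par_un {L x Lam Lam'} : IsLine L -> ~ L x -> ispar L x Lam -> ispar L x Lam' -> Lam = Lam'.
Proof. intros H1 H2 [A [B C]] [A' [B' C']]. destruct (HP L x H1 H2) as [_ U].
  apply ext. apply (U Lam Lam'); auto. Qed.

Lemma E_char {L x Lam z} : IsLine L -> ~ L x -> ispar L x Lam -> pl L x z -> z <> x ->
  Lam z \/ exists w, L w /\ LT x w z.
Proof. intros HLl Hx Hpar Hz Hzx.
  destruct (classic (exists w, L w /\ LT x z w)) as [[w [Hw1 Hw2]]|Hn].
  - right. exists w. split; auto. assert (x <> w) by (intro; subst; auto).
    rewrite (LT_two (not_eq_sym Hzx) (LT_a x z) Hw2 H). apply LT_b.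
  - left. assert (ispar L x (LT x z)).
    { split. apply LT_isline; auto. split. apply LT_a. intros t Ht. split.
      apply (cl_LT (pl_x L x) Hz Ht). intro Ht'. apply Hn. exists t; auto. }
    rewrite <- (par_un HLl Hx H Hpar). apply LT_b.
Qed.

Lemma S1 {L x y} : IsLine L -> ~ L x -> pl L x y -> ~ L y -> pl L y = pl L x.
Proof. intros HLl Hx Hy Hny.
  assert (Hsub : forall z, pl L y z -> pl L x z).
  { intros z Hz. apply (pl_min (pl_flat L x) (pl_L x) Hy Hz). }
  assert (Hx' : pl L y x).
  { destruct (classic (x = y)) as [E|Nxy]. subst; apply pl_x.
    destruct (par_ex HLl Hny) as [Ly Hly].
    destruct Hly as [Ly1 [Ly2 Ly3]].
    destruct (line_other y Ly1) as [t [Ht Hty]].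
    destruct (Ly3 t Ht) as [Ht1 Ht2].
    destruct (classic (t = x)) as [E|Ntx]. subst; auto.
    destruct (par_ex HLl Hx) as [Lx Hlx].
    assert (C : forall s, pl L y s -> s <> x -> ~ L s -> Lx s \/ pl L y x).
    { intros s Hs Hsx Hns. destruct (E_char HLl Hx Hlx (Hsub s Hs) Hsx) as [?|[w [Hw1 Hw2]]]; auto.
      right. assert (w <> s) by (intro; subst; auto).
      rewrite LT_sym in Hw2. apply LT_exch in Hw2; auto.
      exact (cl_LT (pl_L y _ Hw1) Hs Hw2). }
    destruct (C y (pl_x L y) (not_eq_sym Nxy) Hny) as [C1|]; auto.
    destruct (C t Ht1 Ntx Ht2) as [C2|]; auto.
    destruct Hlx as [Lx1 [Lx2 Lx3]].
    rewrite (line_uniq Lx1 Ly1 C1 C2 Ly2 Ht (not_eq_sym Hty)) in Lx2.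
    apply (Ly3 x Lx2). }
  apply ext; intro z; split; auto.
  intro Hz. apply (pl_min (pl_flat L y) (pl_L y) Hx' Hz).
Qed.

Lemma swap_meet {L x M w} : IsLine L -> ~ L x -> IsLine M -> (forall z, M z -> pl L x z) -> M w -> L w ->
  exists z, ~ M z /\ pl M z = pl L x.
Proof. intros HLl Hx HM HMs Hw1 Hw2.
  destruct (line_other w HM) as [m [Hm Hmw]].
  destruct (classic (L m)) as [Lm|NLm].
  { rewrite (line_uniq HM HLl Hw1 Hm Hw2 Lm (not_eq_sym Hmw)). exists x; auto. }
  assert (E1 := S1 HLl Hx (HMs m Hm) NLm).
  destruct (line_other w HLl) as [l [Hl Hlw]].
  assert (NMl : ~ M l).
  { intro Ml. apply NLm. rewrite <- (line_uniq HM HLl Hw1 Ml Hw2 Hl (not_eq_sym Hlw)). auto. }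
  exists l. split; auto. apply ext; intro z; split; intro Hz.
  - apply (pl_min (pl_flat L x) HMs (pl_L x _ Hl) Hz).
  - rewrite <- E1 in Hz. refine (pl_min (pl_flat M l) _ _ Hz).
    + intros v Hv. rewrite <- (line_eq HLl Hw2 Hl (not_eq_sym Hlw)) in Hv.
      apply (cl_LT (pl_L l _ Hw1) (pl_x M l) Hv).
    + apply pl_L; auto.
Qed.

Lemma swap_gen {L x M} : IsLine L -> ~ L x -> IsLine M -> (forall z, M z -> pl L x z) ->
  exists z, ~ M z /\ pl M z = pl L x.
Proof. intros HLl Hx HM HMs.
  destruct (classic (exists w, M w /\ L w)) as [[w [Hw1 Hw2]]|Hn].
  { apply (swap_meet HLl Hx HM HMs Hw1 Hw2). }
  destruct (line_two HM) as [m [m' [Hmm [Hm Hm']]]].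
  destruct (line_two HLl) as [w [_ [_ [Hw _]]]].
  assert (Hmw : m <> w) by (intro; subst; apply Hn; eauto).
  assert (HN := LT_isline Hmw).
  assert (HNs : forall z, LT m w z -> pl L x z).
  { intros z Hz. apply (cl_LT (HMs m Hm) (pl_L x _ Hw) Hz). }
  destruct (swap_meet HLl Hx HN HNs (LT_b m w) Hw) as [z' [Hz'1 Hz'2]].
  assert (NNm' : ~ LT m w m').
  { intro Hc. apply Hn. exists w. split; auto.
    rewrite (line_uniq HM HN Hm Hm' (LT_a m w) Hc Hmm). apply LT_b. }
  assert (E2 : pl (LT m w) m' = pl L x).
  { rewrite <- Hz'2. apply S1; auto. rewrite Hz'2. auto. }
  exists w. split. intro; apply Hn; eauto.
  apply ext; intro z; split; intro Hz.
  - apply (pl_min (pl_flat L x) HMs (pl_L x _ Hw) Hz).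
  - rewrite <- E2 in Hz. refine (pl_min (pl_flat M w) _ _ Hz).
    + intros v Hv. apply (cl_LT (pl_L w _ Hm) (pl_x M w) Hv).
    + apply pl_L; auto.
Qed.

Lemma S2 {L x M y} : IsLine L -> ~ L x -> IsLine M -> (forall z, M z -> pl L x z) ->
  pl L x y -> ~ M y -> pl M y = pl L x.
Proof. intros HLl Hx HM HMs Hy Hny.
  destruct (swap_gen HLl Hx HM HMs) as [z [Hz1 Hz2]].
  rewrite <- Hz2. apply S1; auto. rewrite Hz2; auto. Qed.


Lemma two_inner {L x w w' Lx k t} : IsLine L -> ~ L x -> L w -> L w' -> w <> w' ->
  (forall z, L z -> z = w \/ z = w') -> ispar L x Lx -> Lx k -> k <> x -> LT x w t -> t = x \/ t = w.
Proof.
  intros HLl Hx Hw Hw' Hww Hall Hlx Hk Hkx Ht.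
  pose proof Hlx as [Lx1 [Lx2 Lx3]].
  destruct (Lx3 k Hk) as [Hk1 Hk2].
  assert (E1 : pl L k = pl L x) by exact (S1 HLl Hx Hk1 Hk2).
  assert (Hxw : x <> w) by (intro; subst; auto).
  assert (HM := LT_isline Hxw).
  assert (HMs : forall z, LT x w z -> pl L x z) by (intros z Hz; exact (cl_LT (pl_x L x) (pl_L x _ Hw) Hz)).
  assert (Hdiff : forall s, Lx s -> LT x w s -> s = x).
  { intros s Hs1 Hs2. destruct (classic (s = x)); auto. exfalso.
    rewrite (line_uniq Lx1 HM Lx2 Hs1 (LT_a x w) Hs2 (not_eq_sym H)) in Lx3.
    apply (proj2 (Lx3 w (LT_b x w))); auto. }
  assert (NMk : ~ LT x w k) by (intro; apply Hkx; apply Hdiff; auto).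
  assert (E2 : pl (LT x w) k = pl L x) by exact (S2 HLl Hx HM HMs Hk1 NMk).
  destruct (par_ex HM NMk) as [Q HQ]. pose proof HQ as [Q1 [Q2 Q3]].
  destruct (line_other k Q1) as [q [Hq Hqk]].
  assert (HlxK : ispar L k Lx).
  { split; auto. split; auto. intros z Hz. rewrite E1; auto. }
  assert (Hq' : pl L k q) by (rewrite E1, <- E2; apply (Q3 q Hq)).
  assert (Hkw : forall v, L v -> k <> v) by (intros v Hv E; subst; auto).
  assert (Qw' : forall s, LT k w' s -> ~ LT x w s).
  { destruct (E_char HLl Hk2 HlxK Hq' Hqk) as [Hc|[v [Hv1 Hv2]]].
    - exfalso. rewrite (line_uniq Q1 Lx1 Q2 Hq Hk Hc (not_eq_sym Hqk)) in Q3.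
      apply (proj2 (Q3 x Lx2)). apply LT_a.
    - destruct (Hall v Hv1); subst v.
      + exfalso.
        rewrite (line_uniq Q1 (LT_isline (Hkw w Hw)) Q2 Hq (LT_a k w) Hv2 (not_eq_sym Hqk)) in Q3.
        apply (proj2 (Q3 w (LT_b k w))). apply LT_b.
      + rewrite (line_uniq Q1 (LT_isline (Hkw w' Hw')) Q2 Hq (LT_a k w') Hv2 (not_eq_sym Hqk)) in Q3.
        intros s Hs. apply (proj2 (Q3 s Hs)). }
  destruct (classic (t = x)); auto. destruct (classic (t = w)); auto. exfalso.
  assert (Htk : t <> k) by (intro; subst; auto).
  assert (Htp : pl L k t) by (rewrite E1; apply HMs; auto).
  destruct (E_char HLl Hk2 HlxK Htp Htk) as [Hc|[v [Hv1 Hv2]]].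
  - exact (H (Hdiff t Hc Ht)).
  - destruct (Hall v Hv1); subst v.
    + apply NMk. rewrite <- (LT_two Hxw (LT_b x w) Ht (not_eq_sym H0)).
      rewrite (LT_two (Hkw w Hw) (LT_b k w) Hv2 (not_eq_sym H0)). apply LT_a.
    + apply (Qw' t Hv2 Ht).
Qed.

Lemma two_pt_line {L a b x} : IsLine L -> L a -> L b -> a <> b -> (forall z, L z -> z = a \/ z = b) -> ~ L x -> False.
Proof.
  intros HLl Ha Hb Hab Hall Hx.
  destruct (par_ex HLl Hx) as [Lx Hlx]. pose proof Hlx as [Lx1 [Lx2 Lx3]].
  destruct (line_other x Lx1) as [k [Hk Hkx]]. destruct (Lx3 k Hk) as [Hk1 Hk2].
  assert (Hall' : forall z, L z -> z = b \/ z = a) by (intros z Hz; destruct (Hall z Hz); auto).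
  assert (Ha' := fun t => @two_inner L x a b Lx k t HLl Hx Ha Hb Hab Hall Hlx Hk Hkx).
  assert (Hb' := fun t => @two_inner L x b a Lx k t HLl Hx Hb Ha (not_eq_sym Hab) Hall' Hlx Hk Hkx).
  set (F := fun z => z = a \/ z = b \/ z = x).
  assert (HF : fl F).
  { intros u v Hu Hv Huv z Hz. unfold F in *.
    assert (HLab : forall z, LT a b z -> z = a \/ z = b \/ z = x).
    { intros z' Hz'. rewrite (line_eq HLl Ha Hb Hab) in Hz'. destruct (Hall z' Hz'); auto. }
    destruct Hu as [?|[?|?]]; destruct Hv as [?|[?|?]]; subst; try congruence;
      first [ now auto
            | now (rewrite LT_sym in Hz; auto)
            | now (destruct (Ha' z Hz); auto)
            | now (destruct (Hb' z Hz); auto)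
            | now (rewrite LT_sym in Hz; destruct (Ha' z Hz); auto)
            | now (rewrite LT_sym in Hz; destruct (Hb' z Hz); auto) ]. }
  assert (Fk : F k).
  { refine (pl_min HF _ _ Hk1). intros w Hw. unfold F. destruct (Hall w Hw); auto. unfold F; auto. }
  destruct Fk as [?|[?|?]]; subst; auto.
Qed.

Lemma long3_of : more_than_two X -> long3 IsLine.
Proof.
  intros [p [q [r [Hpq [Hpr Hqr]]]]] L HLl.
  destruct (line_two HLl) as [a [b [Hab [Ha Hb]]]].
  destruct (classic (exists c, L c /\ c <> a /\ c <> b)) as [[c [Hc1 [Hc2 Hc3]]]|Hn].
  { exists a, b, c. repeat split; auto. }
  assert (Hall : forall z, L z -> z = a \/ z = b).
  { intros z Hz. destruct (classic (z = a)); auto. destruct (classic (z = b)); auto. exfalso; eauto. }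
  exfalso.
  destruct (classic (L p)) as [Lp|Lp]; [|exact (two_pt_line HLl Ha Hb Hab Hall Lp)].
  destruct (classic (L q)) as [Lq|Lq]; [|exact (two_pt_line HLl Ha Hb Hab Hall Lq)].
  destruct (classic (L r)) as [Lr|Lr]; [|exact (two_pt_line HLl Ha Hb Hab Hall Lr)].
  destruct (Hall p Lp); destruct (Hall q Lq); destruct (Hall r Lr); subst; congruence.
Qed.


Lemma pick3 (P Q : X -> Prop) c1 c2 c3 : c1 <> c2 -> c1 <> c3 -> c2 <> c3 ->
  (forall u v, P u -> P v -> u = v) -> (forall u v, Q u -> Q v -> u = v) ->
  exists c, (c = c1 \/ c = c2 \/ c = c3) /\ ~ P c /\ ~ Q c.
Proof.
  intros n12 n13 n23 HPu HQu.
  destruct (classic (exists c, (c = c1 \/ c = c2 \/ c = c3) /\ ~ P c /\ ~ Q c)) as [|N]; auto.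
  exfalso.
  assert (H1 : P c1 \/ Q c1) by (apply NNPP; intro; apply N; exists c1; tauto).
  assert (H2 : P c2 \/ Q c2) by (apply NNPP; intro; apply N; exists c2; tauto).
  assert (H3 : P c3 \/ Q c3) by (apply NNPP; intro; apply N; exists c3; tauto).
  destruct H1 as [h1|h1]; destruct H2 as [h2|h2]; destruct H3 as [h3|h3];
  first [ apply n12; now apply (HPu _ _ h1 h2) | apply n13; now apply (HPu _ _ h1 h3)
        | apply n23; now apply (HPu _ _ h2 h3) | apply n12; now apply (HQu _ _ h1 h2)
        | apply n13; now apply (HQu _ _ h1 h3) | apply n23; now apply (HQu _ _ h2 h3) ].
Qed.

Lemma cl2 a b : cl (of_list [a;b]) = LT a b.
Proof. apply ext; intro z; split; intro Hz.
  - refine (cl_min (LT_flat a b) _ z Hz). intros w [E|[E|[]]]; subst; [apply LT_a|apply LT_b].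
  - refine (cl_LT _ _ Hz); apply cl_incl; simpl; auto. Qed.

Lemma cl1 a : cl (of_list [a]) = LT a a.
Proof. apply ext; intro z; split; intro Hz.
  - refine (cl_min (LT_flat a a) _ z Hz). intros w [E|[]]; subst; apply LT_a.
  - apply LT_aa in Hz; subst. apply cl_incl; simpl; auto. Qed.

Lemma cl0 z : cl (of_list []) z -> False.
Proof. intro Hz. refine (cl_min (F := fun _ => False) _ _ z Hz).
  intros u v []. intros w []. Qed.

Lemma cl_ins (A : X -> Prop) p : cl (fun z => z = p \/ A z) = cl (fun z => z = p \/ cl A z).
Proof. apply ext; intro z; split; apply cl_sub; intros w [E|Hw].
  - apply cl_incl; auto.
  - apply cl_incl; right; apply cl_incl; auto.
  - apply cl_incl; auto.
  - refine (cl_sub _ Hw). intros v Hv; apply cl_incl; auto. Qed.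

Lemma reg_core (HLg : long3 IsLine) a b o p z : LT a b o -> ~ LT a b p ->
  cl (fun w => w = p \/ LT a b w) z -> exists u a', LT o p u /\ LT a b a' /\ LT u a' z.
Proof.
  intros Ho Hp Hz.
  destruct (classic (a = b)) as [E|Nab].
  { subst b. apply LT_aa in Ho. subst o.
    assert (Hz' : LT a p z).
    { refine (cl_min (LT_flat a p) _ z Hz). intros w [E|Hw]. subst; apply LT_b.
      apply LT_aa in Hw; subst; apply LT_a. }
    exists z, a. split; auto. split; apply LT_a. }
  set (L := LT a b) in *.
  assert (HLl : IsLine L) by (apply LT_isline; auto).
  assert (Hz1 : pl L p z).
  { refine (cl_sub _ Hz). intros w [E|Hw]; apply cl_incl; auto. }
  destruct (classic (L z)) as [Lzz|NLzz].
  { exists o, z. split. apply LT_a. split; auto. apply LT_b. }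
  destruct (classic (LT o p z)) as [Kz|NKz].
  { exists z, o. split; auto. split; auto. apply LT_a. }
  assert (Nop : o <> p) by (intro; subst; auto).
  assert (HK : IsLine (LT o p)) by (apply LT_isline; auto).
  assert (HKs : forall s, LT o p s -> pl L p s) by (intros s Hs; exact (cl_LT (pl_L p _ Ho) (pl_x L p) Hs)).
  assert (E := S2 HLl Hp HK HKs Hz1 NKz).
  destruct (par_ex HK NKz) as [Lz HLz]. pose proof HLz as [Lz1 [Lz2 Lz3]].
  destruct (HLg L HLl) as [c1 [c2 [c3 [n12 [n13 [n23 [h1 [h2 h3]]]]]]]].
  assert (Hne : L <> Lz) by (intro Ee; rewrite <- Ee in Lz2; auto).
  destruct (pick3 (fun c => c = o) (fun c => Lz c /\ L c) c1 c2 c3 n12 n13 n23) as [a' [Ha'1 [Ha'2 Ha'3]]].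
  { intros u v Hu Hv; subst; auto. }
  { intros u v [Hu1 Hu2] [Hv1 Hv2]. destruct (classic (u = v)); auto. exfalso. apply Hne.
    symmetry. apply (line_uniq Lz1 HLl Hu1 Hv1 Hu2 Hv2 H). }
  assert (La' : L a') by (destruct Ha'1 as [?|[?|?]]; subst; auto).
  assert (NLz : ~ Lz a') by (intro; apply Ha'3; auto).
  assert (Nza : z <> a') by (intro; subst; auto).
  destruct (classic (exists u, LT z a' u /\ LT o p u)) as [[u [Hu1 Hu2]]|Hn].
  - exists u, a'. split; auto. split; auto.
    assert (Nua : u <> a').
    { intro; subst u. apply Ha'2. symmetry.
      apply NNPP; intro Hoa. apply Hp.
      assert (EKL := line_uniq HK HLl (LT_a o p) Hu2 Ho La' Hoa).
      rewrite <- EKL. apply LT_b. }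
    rewrite (LT_two Nza Hu1 (LT_b z a') Nua). apply LT_a.
  - exfalso. apply NLz.
    assert (Hpar : ispar (LT o p) z (LT z a')).
    { split. apply LT_isline; auto. split. apply LT_a. intros s Hs. split.
      rewrite E. exact (cl_LT Hz1 (pl_L p _ La') Hs).
      intro; apply Hn; eauto. }
    rewrite <- (par_un HK NKz Hpar HLz). apply LT_b.
Qed.

Lemma reg_of (HLg : long3 IsLine) : regular3 IsLine.
Proof.
  intros A o p [l [Hlen Heq]] Ho Hp z.
  assert (EA : A = of_list l) by (apply ext; exact Heq). subst A.
  split.
  - intro Hz. rewrite cl_ins in Hz.
    destruct l as [|a [|b [|c l']]]; simpl in Hlen; try lia.
    + exfalso; exact (cl0 o Ho).
    + rewrite cl1 in Ho, Hp, Hz |- *. apply (reg_core HLg a a o p z); auto.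
    + rewrite cl2 in Ho, Hp, Hz |- *. apply (reg_core HLg a b o p z); auto.
  - intros [u [a' [Hu [Ha Hz]]]].
    assert (Hsub : forall w, cl (of_list l) w -> cl (fun z => z = p \/ of_list l z) w).
    { intros w Hw. refine (cl_sub _ Hw). intros v Hv; apply cl_incl; auto. }
    assert (Hpp : cl (fun z => z = p \/ of_list l z) p) by (apply cl_incl; auto).
    exact (cl_LT (cl_LT (Hsub o Ho) Hpp Hu) (Hsub a' Ha) Hz).
Qed.

Lemma aff_of : affine IsLine.
Proof.
  intros o x y p Hp Hnp.
  destruct (classic (x = y)) as [E|Nxy].
  { subst y. apply LT_aa in Hp; subst p. exfalso; apply Hnp; apply LT_b. }
  destruct (classic (o = x)) as [E|Nox].
  - subst x. exists p. split; auto. intros v Hv. split.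
    + intro E; subst v. intros [w [Hw1 Hw2]]. apply LT_aa in Hw1; apply LT_aa in Hw2. subst.
      apply Hnp; apply LT_a.
    + intro Hn. apply NNPP; intro Hne. apply Hn. exists o. split; [|apply LT_a].
      rewrite (LT_two Nxy Hv Hp (not_eq_sym Hne)). apply LT_a.
  - 
    assert (HM : IsLine (LT o x)) by (apply LT_isline; auto).
    assert (Npx : p <> x) by (intro; subst; apply Hnp; apply LT_b).
    assert (Hy : pl (LT o x) p y).
    { apply LT_exch in Hp; auto. exact (cl_LT (pl_L p _ (LT_b o x)) (pl_x (LT o x) p) Hp). }
    assert (Noy : o <> y).
    { intro; subst y. apply Hnp. rewrite LT_sym. exact Hp. }
    assert (NMy : ~ (LT o x) y).
    { intro My. apply Hnp. rewrite <- (LT_two Nox (LT_b o x) My Nxy). exact Hp. }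
    assert (HN : IsLine (LT o y)) by (apply LT_isline; auto).
    assert (HNs : forall s, (LT o y) s -> pl (LT o x) p s) by (intros s Hs; exact (cl_LT (pl_L p _ (LT_a o x)) Hy Hs)).
    destruct (par_ex HM Hnp) as [Lp HLp]. pose proof HLp as [L1 [L2 L3]].
    assert (Meet : exists u, (LT o y) u /\ Lp u).
    { apply NNPP; intro Hn.
      assert (NLo : ~ Lp o) by (intro Ho; apply (proj2 (L3 o Ho)); apply LT_a).
      assert (E := S2 HM Hnp L1 (fun s Hs => proj1 (L3 s Hs)) (pl_L p _ (LT_a o x)) NLo).
      assert (P1 : ispar Lp o (LT o y)).
      { split; auto. split. apply LT_a. intros s Hs. split. rewrite E; auto. intro; apply Hn; eauto. }
      assert (P2 : ispar Lp o (LT o x)).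
      { split; auto. split. apply LT_a. intros s Hs. split. rewrite E; apply pl_L; auto.
        intro Hs'; apply (proj2 (L3 s Hs')); auto. }
      apply NMy. rewrite <- (par_un L1 NLo P1 P2). apply LT_b. }
    destruct Meet as [u [Nu Lu]].
    assert (Hsame : forall v, (LT o y) v -> Lp v -> v = u).
    { intros v Hv1 Hv2. apply NNPP; intro Hne.
      assert (EE := line_uniq HN L1 Hv1 Nu Hv2 Lu Hne).
      assert (Lo : Lp o) by (rewrite <- EE; apply LT_a).
      apply (proj2 (L3 o Lo)). apply LT_a. }
    exists u. split; auto. intros v Hv. split.
    + intro E; subst v. intros [w [Hw1 Hw2]].
      apply (proj2 (L3 w (flat_LT (line_flat L1) Lu L2 Hw1))). exact Hw2.
    + intro Hn. destruct (classic (v = p)) as [E|Nvp].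
      * subst v. symmetry. apply Hsame; auto.
      * assert (HK : ispar (LT o x) p (LT v p)).
        { split. apply LT_isline; auto. split. apply LT_b. intros s Hs. split.
          exact (cl_LT (HNs v Hv) (pl_x (LT o x) p) Hs). intro; apply Hn; eauto. }
        assert (EE := par_un HM Hnp HK HLp). symmetry. apply Hsame; auto.
        rewrite <- EE. apply LT_a.
Qed.
End Par.

Lemma cl_small B : length B <= 2 ->
  (forall z, ~ cl (of_list B) z) \/ exists c d, forall z, cl (of_list B) z -> LT c d z.
Proof.
  destruct B as [|a [|b [|c B']]]; simpl; intros Hl; try lia.
  - left. intros z Hz. exact (cl0 z Hz).
  - right. exists a, a. intro z. rewrite cl1; auto.
  - right. exists a, b. intro z. rewrite cl2; auto.
Qed.

Lemma play_par : playfair IsLine -> parallel_property IsLine.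
Proof.
  intros Hpf L x HLl Hx. cbv zeta.
  destruct (line_two HLl) as [a [b [Hab [Ha Hb]]]].
  assert (Hpl : plane IsLine (pl L x)).
  { split. apply pl_flat. split.
    - exists [a;b;x]. split. simpl; lia. intros z Hz. refine (pl_min cl_flat _ _ Hz).
      + intros w Hw. rewrite <- (line_eq HLl Ha Hb Hab) in Hw. refine (cl_LT _ _ Hw); apply cl_incl; simpl; auto.
      + apply cl_incl; simpl; auto.
    - intros [B [Hlen Hsub]]. destruct (cl_small B Hlen) as [N|[c [d Hcd]]].
      + exact (N x (Hsub x (pl_x L x))).
      + assert (Ha' := Hcd a (Hsub a (pl_L x a Ha))).
        assert (Hb' := Hcd b (Hsub b (pl_L x b Hb))).
        assert (Hx' := Hcd x (Hsub x (pl_x L x))).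
        assert (Hcd' : c <> d) by (intro; subst; apply LT_aa in Ha'; apply LT_aa in Hb'; congruence).
        apply Hx. rewrite <- (line_eq HLl Ha Hb Hab). rewrite (LT_two Hcd' Ha' Hb' Hab). exact Hx'. }
  exact (Hpf (pl L x) L x Hpl HLl (pl_L x) (pl_x L x) Hx).
Qed.

Section Reg.
Hypothesis HA : affine IsLine.
Hypothesis HR : regular3 IsLine.
Hypothesis HLg : long3 IsLine.

Definition cl3 a b c := cl (of_list [a;b;c]).
Definition ncol a b c := a <> b /\ ~ LT a b c.

Lemma cl_ext (A B : X -> Prop) : (forall z, A z <-> B z) -> cl A = cl B.
Proof. intro H. apply ext in H. subst; auto. Qed.

Lemma cl3_12 a b c : cl3 a b c = cl3 b a c.
Proof. apply cl_ext. intro z; simpl; tauto. Qed.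
Lemma cl3_23 a b c : cl3 a b c = cl3 a c b.
Proof. apply cl_ext. intro z; simpl; tauto. Qed.

Lemma ncol_12 {a b c} : ncol a b c -> ncol b a c.
Proof. intros [H1 H2]. split; auto. rewrite LT_sym; auto. Qed.
Lemma ncol_23 {a b c} : ncol a b c -> ncol a c b.
Proof. intros [H1 H2]. assert (a <> c) by (intro; subst; apply H2; apply LT_a).
  split; auto. intro Hc. apply H2. apply LT_exch; auto. Qed.

Lemma cl3_a a b c : cl3 a b c a.
Proof. apply cl_incl; simpl; auto. Qed.
Lemma cl3_b a b c : cl3 a b c b.
Proof. apply cl_incl; simpl; auto. Qed.
Lemma cl3_c a b c : cl3 a b c c.
Proof. apply cl_incl; simpl; auto. Qed.

Lemma ncol_meet {a b c z} : ncol a b c -> LT a b z -> LT a c z -> z = a.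
Proof. intros Hn Hb Hc. destruct (classic (z = a)); auto. exfalso.
  destruct (ncol_23 Hn) as [Hac _]. destruct Hn as [Hab Hn].
  apply Hn. rewrite <- (LT_two Hab (LT_a a b) Hb (not_eq_sym H)).
  rewrite (LT_two Hac (LT_a a c) Hc (not_eq_sym H)). apply LT_b. Qed.

Lemma reg_exch {d1 d2 p q} : d1 <> d2 -> ~ LT d1 d2 p -> cl3 d1 d2 p q -> ~ LT d1 d2 q -> cl3 d1 d2 q p.
Proof.
  intros H12 Hp Hq Hnq.
  assert (C : card_lt3 (of_list [d1;d2])) by (exists [d1;d2]; split; [simpl; lia | intro; tauto]).
  assert (Ho : cl (of_list [d1;d2]) d1) by (rewrite cl2; apply LT_a).
  assert (Hnp : ~ cl (of_list [d1;d2]) p) by (rewrite cl2; auto).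
  destruct (proj1 (HR (of_list [d1;d2]) d1 p C Ho Hnp q)) as [u [a' [Hu [Ha' Hz]]]].
  { refine (cl_sub _ Hq). intros w [E|[E|[E|[]]]]; subst; apply cl_incl; simpl; auto. }
  rewrite cl2 in Ha'.
  assert (FL : forall w, LT d1 d2 w -> cl3 d1 d2 q w).
  { intros w Hw. exact (cl_LT (cl3_a d1 d2 q) (cl3_b d1 d2 q) Hw). }
  assert (Nu : ~ LT d1 d2 u).
  { intro Hu'. apply Hnq. exact (flat_LT (LT_flat d1 d2) Hu' Ha' Hz). }
  assert (Nua : u <> a') by (intro; subst; auto).
  assert (Nqa : q <> a') by (intro; subst; auto).
  assert (Fu : cl3 d1 d2 q u).
  { rewrite LT_sym in Hz. apply LT_exch in Hz; auto. exact (cl_LT (FL a' Ha') (cl3_c d1 d2 q) Hz). }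
  assert (Nud : d1 <> u) by (intro; subst; apply Nu; apply LT_a).
  apply LT_exch in Hu; auto. exact (cl_LT (cl3_a d1 d2 q) Fu Hu).
Qed.

Lemma reg_exch' {d1 d2 p q} : d1 <> d2 -> ~ LT d1 d2 p -> cl3 d1 d2 p q -> ~ LT d1 d2 q -> cl3 d1 d2 q = cl3 d1 d2 p.
Proof.
  intros H12 Hp Hq Hnq. apply ext; intro z; split; apply cl_sub; intros w [E|[E|[E|[]]]]; subst;
    try (apply cl_incl; simpl; auto; fail); auto.
  apply reg_exch; auto.
Qed.

Lemma reg_step {d1 d2 d3 q} : ncol d1 d2 d3 -> cl3 d1 d2 d3 q -> q <> d1 ->
  exists e, cl3 d1 d2 d3 = cl3 q d1 e /\ ncol q d1 e.
Proof.
  intros Hn Hq Hqd.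
  destruct (classic (LT d1 d2 q)) as [Hl|Hl].
  - assert (Hl' : ~ LT d1 d3 q) by (intro Hc; exact (Hqd (ncol_meet Hn Hl Hc))).
    pose proof (ncol_23 Hn) as Hn'. destruct Hn' as [H13 H132].
    rewrite cl3_23 in Hq |- *.
    rewrite <- (reg_exch' H13 H132 Hq Hl'). exists d3. split.
    + rewrite cl3_23, cl3_12, cl3_23; auto.
    + apply ncol_12. apply ncol_23. split; auto.
  - destruct Hn as [H12 H123].
    rewrite <- (reg_exch' H12 H123 Hq Hl). exists d2. split.
    + rewrite cl3_23, cl3_12, cl3_23; auto.
    + apply ncol_12. apply ncol_23. split; auto.
Qed.

Lemma PL {b1 b2 b3 c1 c2 c3} : ncol b1 b2 b3 -> cl3 b1 b2 b3 c1 -> cl3 b1 b2 b3 c2 -> cl3 b1 b2 b3 c3 ->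
  ncol c1 c2 c3 -> cl3 c1 c2 c3 = cl3 b1 b2 b3.
Proof.
  intros Hb H1 H2 H3 Hc.
  assert (S1' : exists e2 e3, cl3 b1 b2 b3 = cl3 c1 e2 e3 /\ ncol c1 e2 e3).
  { destruct (classic (c1 = b1)) as [E|N].
    - subst. exists b2, b3. auto.
    - destruct (reg_step Hb H1 N) as [e [E1 E2]]. exists b1, e. auto. }
  destruct S1' as [e2 [e3 [E1 Hn1]]].
  rewrite E1 in H2, H3 |- *.
  destruct Hc as [Hc12 Hc3].
  destruct (reg_step Hn1 H2 (not_eq_sym Hc12)) as [e [E2 Hn2]].
  rewrite E2 in H3 |- *.
  destruct Hn2 as [H21 H21e].
  assert (Hc3' : ~ LT c2 c1 c3) by (rewrite LT_sym; auto).
  rewrite <- (reg_exch' H21 H21e H3 Hc3'). apply cl3_12.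
Qed.


Lemma card2 (d1 d2 : X) : card_lt3 (of_list [d1;d2]).
Proof. exists [d1;d2]; split; [simpl; lia | intro; tauto]. Qed.

Lemma one_dir {L a b x L0 L1} : IsLine L -> L a -> L b -> a <> b -> ~ L x ->
  IsLine L0 -> L0 x -> (forall z, L0 z -> cl3 a b x z /\ ~ L z) ->
  IsLine L1 -> L1 x -> (forall z, L1 z -> cl3 a b x z /\ ~ L z) ->
  forall z1, L1 z1 -> L0 z1.
Proof.
  intros HLl Ha Hb Hab Hx HL0 L0x L0s HL1 L1x L1s z1 Hz1.
  apply NNPP; intro N0.
  assert (Nzx : z1 <> x) by (intro; subst; auto).
  destruct (line_other x HL0) as [z0 [Hz0 Hz0x]].
  assert (E0 : LT x z0 = L0) by exact (line_eq HL0 L0x Hz0 (not_eq_sym Hz0x)).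
  assert (E1 : LT x z1 = L1) by exact (line_eq HL1 L1x Hz1 (not_eq_sym Nzx)).
  assert (HLab : LT a b = L) by exact (line_eq HLl Ha Hb Hab).
  assert (Nabx : ncol a b x) by (split; auto; rewrite HLab; auto).
  assert (Nc : ncol x z0 z1) by (split; auto; rewrite E0; auto).
  assert (PL1 : cl3 x z0 z1 = cl3 a b x).
  { apply PL; auto. apply cl3_c. apply (proj1 (L0s z0 Hz0)). apply (proj1 (L1s z1 Hz1)). }
  assert (Ho : cl (of_list [x;z0]) x) by (rewrite cl2; apply LT_a).
  assert (Hnp : ~ cl (of_list [x;z0]) z1) by (rewrite cl2, E0; auto).
  destruct (proj1 (HR (of_list [x;z0]) x z1 (card2 x z0) Ho Hnp a)) as [u [s [Hu [Hs Hz]]]].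
  { assert (Ha3 : cl3 x z0 z1 a) by (rewrite PL1; apply cl3_a).
    refine (cl_sub _ Ha3). intros w [E|[E|[E|[]]]]; subst; apply cl_incl; simpl; auto. }
  rewrite cl2, E0 in Hs. rewrite E1 in Hu.
  assert (NLu : ~ L u) by exact (proj2 (L1s u Hu)).
  assert (Nus : u <> s) by (intro; subst; apply LT_aa in Hz; subst; auto).
  assert (Nux : u <> x).
  { intro; subst u. assert (s <> x) by auto. rewrite (line_eq HL0 L0x Hs (not_eq_sym H)) in Hz.
    exact (proj2 (L0s a Hz) Ha). }
  assert (Nsx : s <> x).
  { intro; subst s. rewrite (line_eq HL1 Hu L1x Nux) in Hz. exact (proj2 (L1s a Hz) Ha). }
  assert (HT : IsLine (LT u s)) by (apply LT_isline; auto).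
  assert (NTx : ~ LT u s x).
  { intro Tx. rewrite (line_uniq HT HL1 (LT_a u s) Tx Hu L1x Nux) in Hz. exact (proj2 (L1s a Hz) Ha). }
  assert (Nau : a <> u) by (intro; subst; auto).
  assert (ET : LT a u = LT u s) by exact (line_eq HT Hz (LT_a u s) Nau).
  assert (NTb : ~ LT u s b).
  { intro Tb. apply NLu. rewrite <- (line_uniq HT HLl Hz Tb Ha Hb Hab). apply LT_a. }
  assert (Naub : ncol a u b) by (split; auto; rewrite ET; auto).
  assert (PL2 : cl3 a u b = cl3 a b x).
  { apply PL; auto. apply cl3_a. apply (proj1 (L1s u Hu)). apply cl3_b. }
  assert (Ho2 : cl (of_list [a;u]) a) by (rewrite cl2; apply LT_a).
  assert (Hnp2 : ~ cl (of_list [a;u]) b) by (rewrite cl2, ET; auto).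
  destruct (proj1 (HR (of_list [a;u]) a b (card2 a u) Ho2 Hnp2 x)) as [v [t [Hv [Ht Hx']]]].
  { assert (Hx3 : cl3 a u b x) by (rewrite PL2; apply cl3_c).
    refine (cl_sub _ Hx3). intros w [E|[E|[E|[]]]]; subst; apply cl_incl; simpl; auto. }
  rewrite cl2, ET in Ht. rewrite HLab in Hv.
  assert (Nvt : v <> t) by (intro; subst; apply LT_aa in Hx'; subst; auto).
  assert (Nta : t <> a).
  { intro; subst t. apply Hx. exact (flat_LT (line_flat HLl) Hv Ha Hx'). }
  assert (Nva : v <> a).
  { intro; subst v. apply NTx. exact (flat_LT (line_flat HT) Hz Ht Hx'). }
  assert (Hnax : ~ LT a v x).
  { intro Hc. apply Hx. exact (flat_LT (line_flat HLl) Ha Hv Hc). }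
  destruct (HA a v t x Hx' Hnax) as [us [_ Hprop]].
  assert (Eat : LT a t = LT u s) by exact (line_eq HT Hz Ht (not_eq_sym Nta)).
  assert (K : forall w', LT u s w' -> (forall w, LT w' x w -> ~ L w) -> us = w').
  { intros w' Hw' Hd. apply (Hprop w'). rewrite Eat; auto.
    intros [w [Hw1 Hw2]]. apply (Hd w Hw1). exact (flat_LT (line_flat HLl) Ha Hv Hw2). }
  apply Nus. rewrite <- (K u (LT_a u s)), <- (K s (LT_b u s)); auto.
  - intros w Hw. assert (L0 w) by exact (flat_LT (line_flat HL0) Hs L0x Hw). exact (proj2 (L0s w H)).
  - intros w Hw. assert (L1 w) by exact (flat_LT (line_flat HL1) Hu L1x Hw). exact (proj2 (L1s w H)).
Qed.

Lemma reg_play : playfair IsLine.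
Proof.
  intros P L x [HPf [[B [HB1 HB2]] HP2]] HLl HLP HPx Hx.
  destruct (line_two HLl) as [a [b [Hab [Ha Hb]]]].
  assert (HLab : LT a b = L) by exact (line_eq HLl Ha Hb Hab).
  assert (Nabx : ncol a b x) by (split; auto; rewrite HLab; auto).
  assert (Hin : forall z, cl3 a b x z -> P z).
  { intros z Hz. refine (cl_min HPf _ z Hz). intros w [E|[E|[E|[]]]]; subst; auto. }
  assert (HPP : forall z, P z -> cl3 a b x z).
  { destruct B as [|b1 [|b2 [|b3 [|b4 B']]]]; simpl in HB1; try lia;
      try (exfalso; apply HP2; eexists; split; [|exact HB2]; simpl; lia).
    destruct (classic (ncol b1 b2 b3)) as [Hn|Hn].
    - assert (E := PL Hn (HB2 a (HLP a Ha)) (HB2 b (HLP b Hb)) (HB2 x HPx) Nabx).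
      intros z Hz. rewrite E. exact (HB2 z Hz).
    - exfalso. apply HP2. destruct (classic (b1 = b2)) as [E|N].
      + subst. exists [b2;b3]. split. simpl; lia. intros z Hz. refine (cl_sub _ (HB2 z Hz)).
        intros w [E|[E|[E|[]]]]; subst; apply cl_incl; simpl; auto.
      + exists [b1;b2]. split. simpl; lia. intros z Hz. refine (cl_sub _ (HB2 z Hz)).
        intros w [E|[E|[E|[]]]]; subst; try (apply cl_incl; simpl; auto; fail).
        rewrite cl2. apply NNPP; intro; apply Hn; split; auto. }
  split.
  - destruct (classic (b = x)) as [E|Nbx]; [subst; contradiction|].
    destruct (HLg (LT b x) (LT_isline Nbx)) as [c1 [c2 [c3 [n12 [n13 [n23 [h1 [h2 h3]]]]]]]].
    destruct (pick3 (fun c => c = b) (fun c => c = x) c1 c2 c3 n12 n13 n23) as [y [Hy1 [Hy2 Hy3]]].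
    { intros; subst; auto. } { intros; subst; auto. }
    assert (Hy : LT b x y) by (destruct Hy1 as [?|[?|?]]; subst; auto).
    assert (Eby : LT b y = LT b x) by exact (LT_two Nbx (LT_a b x) Hy (not_eq_sym Hy2)).
    assert (Hpy : LT b y x) by (rewrite Eby; apply LT_b).
    assert (Hnab : ~ LT a b x) by (rewrite HLab; auto).
    destruct (HA a b y x Hpy Hnab) as [u [Hu Hprop]].
    assert (Hu' := proj1 (Hprop u Hu) eq_refl).
    assert (Nux : u <> x).
    { intro; subst u. assert (Nay : a <> y).
      { intro; subst y. apply Hnab. rewrite (LT_two Nbx Hy (LT_a b x) Hab). apply LT_b. }
      assert (Eyx : LT y x = LT a y) by exact (LT_two Nay (LT_b a y) Hu Hy3).
      assert (Eyx' : LT y x = LT b x) by exact (LT_two Nbx Hy (LT_b b x) Hy3).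
      assert (Ea : LT b x a) by (rewrite <- Eyx', Eyx; apply LT_a).
      apply Hnab. rewrite (LT_two Nbx Ea (LT_a b x) Hab). apply LT_b. }
    exists (LT u x). split. apply LT_isline; auto. split. apply LT_b.
    intros z Hz. split.
    + apply Hin. refine (cl_LT _ (cl3_c a b x) Hz).
      refine (cl_LT (cl3_a a b x) _ Hu).
      exact (cl_LT (cl3_b a b x) (cl3_c a b x) Hy).
    + intro Lz. apply Hu'. exists z. split; auto. rewrite HLab; auto.
  - intros L0 L1 HL0 L0x L0s HL1 L1x L1s.
    assert (S0 : forall z, L0 z -> cl3 a b x z /\ ~ L z) by (intros z Hz; destruct (L0s z Hz); auto).
    assert (S1' : forall z, L1 z -> cl3 a b x z /\ ~ L z) by (intros z Hz; destruct (L1s z Hz); auto).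
    intro z; split.
    + apply (one_dir HLl Ha Hb Hab Hx HL1 L1x S1' HL0 L0x S0).
    + apply (one_dir HLl Ha Hb Hab Hx HL0 L0x S0 HL1 L1x S1').
Qed.

End Reg.

Lemma main_thm : more_than_two X ->
  (playfair IsLine <-> (affine IsLine /\ regular3 IsLine /\ long3 IsLine)) /\
  (playfair IsLine <-> parallel_property IsLine).
Proof.
  intro Hm.
  assert (P23 : parallel_property IsLine -> affine IsLine /\ regular3 IsLine /\ long3 IsLine).
  { intro HP. assert (Hl := long3_of HP Hm). split. apply (aff_of HP). split; auto. apply (reg_of HP Hl). }
  assert (P31 : affine IsLine /\ regular3 IsLine /\ long3 IsLine -> playfair IsLine).
  { intros [H1 [H2 H3]]. apply (reg_play H1 H2 H3). }
  split; split; intro H.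
  - apply P23. apply play_par; auto.
  - apply P31; auto.
  - apply play_par; auto.
  - apply P31; apply P23; auto.
Qed.

End Liner.

Theorem theorem3p7p2 (X : Type) (IsLine : (X -> Prop) -> Prop) :
  is_liner IsLine -> more_than_two X ->
  (playfair IsLine <-> (affine IsLine /\ regular3 IsLine /\ long3 IsLine)) /\
  (playfair IsLine <-> parallel_property IsLine).
Proof.
  intros HL Hm. exact (main_thm X IsLine HL Hm).
Qed.
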